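(* Let $G$ be a finite block graph that is identifiable, i.e. $G$ has no pair of distinct vertices $u,v$ with $N[u]=N[v]$. Then $\gamma^{ID}(G)\leq n_Q(G)$, where $n_Q(G)$ denotes the number of maximal cliques of $G$.
   Context: A block graph is a graph in which every maximal 2-connected subgraph (block) is a clique. For a vertex $u$, $N(u)$ is its open neighborhood and $N[u]=N(u)\cup\{u\}$ its closed neighborhood. A set $C\subseteq V(G)$ is an identifying code (ID-code) if $N[u]\cap C\neq\emptyset$ for every vertex $u$ and $N[u]\cap C\neq N[v]\cap C$ for all distinct vertices $u,v$. A graph admits an ID-code iff it is identifiable (has no distinct $u,v$ with $N[u]=N[v]$). $\gamma^{ID}(G)$ is the minimum cardinality of an ID-code of $G$. $n_Q(G)$ is the number of maximal cliques of $G$. *)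

(* Defs.v *)
(* A finite simple graph is a symmetric irreflexive
   relation e : rel T on a finType T. *)
From mathcomp Require Import all_boot.
Set Implicit Arguments. Unset Strict Implicit. Unset Printing Implicit Defensive.

Section Graphs.
Variables (T : finType) (e : rel T).

Definition cnbhd (u : T) : {set T} := [set v | (v == u) || e u v].

Definition induced_rel (S : {set T}) : rel T :=
  [rel x y | [&& x \in S, y \in S & e x y]].

Definition connected_set (S : {set T}) : Prop :=
  forall x y, x \in S -> y \in S -> connect (induced_rel S) x y.

Definition biconnected_set (S : {set T}) : Prop :=
  2 < #|S| /\ connected_set S /\ forall v, v \in S -> connected_set (S :\ v).

(* a block (with >= 3 vertices): a maximal vertex set inducing a
   2-connected subgraph *)
Definition is_block (S : {set T}) : Prop :=
  biconnected_set S /\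
  forall S' : {set T}, S \subset S' -> biconnected_set S' -> S' = S.

Definition is_clique (K : {set T}) : bool :=
  [forall x in K, forall y in K, (x != y) ==> e x y].

Definition block_graph : Prop := forall S, is_block S -> is_clique S.

Definition identifiable : Prop :=
  forall u v, u != v -> cnbhd u != cnbhd v.

Definition is_idcode (C : {set T}) : bool :=
  [forall u, cnbhd u :&: C != set0] &&
  [forall u, forall v, (u != v) ==> (cnbhd u :&: C != cnbhd v :&: C)].

(* minimum size of an ID-code (T itself is an ID-code when G is
   identifiable, so the default #|T| is never below the true minimum) *)
Definition gammaID : nat := \big[minn/#|T|]_(C : {set T} | is_idcode C) #|C|.

Definition nQ : nat := #|[set K : {set T} | maxset is_clique K]|.

End Graphs.

(* Main.v *)
Require Import Defs.
From mathcomp Require Import all_boot zify.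
From Stdlib Require Import Classical.
Set Implicit Arguments. Unset Strict Implicit. Unset Printing Implicit Defensive.

Section Proof.
Variables (T : finType) (e : rel T).
Hypothesis esym : symmetric e.
Hypothesis eirr : irreflexive e.

Local Notation N := (cnbhd e).

Lemma inN x y : (y \in N x) = (y == x) || e x y.
Proof. by rewrite inE. Qed.

Lemma inNC x y : (y \in N x) = (x \in N y).
Proof. by rewrite !inN eq_sym esym. Qed.

Lemma inNself x : x \in N x.
Proof. by rewrite inN eqxx. Qed.

Lemma induced_sym S : symmetric (induced_rel e S).
Proof. move=> x y; rewrite /induced_rel /= esym; by case: (x \in S); case: (y \in S). Qed.

Lemma path_connect (S : {set T}) a q : path e a q -> {subset a :: q <= S} ->
  forall y, y \in a :: q -> connect (induced_rel e S) a y.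
Proof.
elim: q a => [|b q IH] a /= Hp Hs y.
  by rewrite inE => /eqP ->; exact: connect0.
case/andP: Hp => Hab Hp.
rewrite inE => /orP [/eqP -> | Hy]; first exact: connect0.
apply: (connect_trans _ (IH b Hp _ y Hy)).
  apply: connect1; rewrite /induced_rel /= Hab andbT.
  by rewrite !Hs // !inE eqxx ?orbT.
by move=> z Hz; apply: Hs; rewrite inE Hz orbT.
Qed.

Lemma connected_path (S : {set T}) a q : path e a q -> (forall z, (z \in S) = (z \in a :: q)) ->
  connected_set e S.
Proof.
move=> Hp HS x y Hx Hy.
have Hsub : {subset a :: q <= S} by move=> z; rewrite HS.
have Cx := path_connect Hp Hsub (y:=x); have Cy := path_connect Hp Hsub (y:=y).
rewrite HS in Hx; rewrite HS in Hy.
apply: (connect_trans _ (Cy Hy)).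
by rewrite (sym_connect_sym (@induced_sym S)) Cx.
Qed.

Definition nT := #|T|.

Lemma uniq_size_le (s : seq T) : uniq s -> size s <= nT.
Proof. move=> Hu; rewrite -(card_uniqP Hu); exact: max_card. Qed.

Lemma cycle_bicon a q : uniq (a :: q) -> 2 <= size q -> path e a q -> e (last a q) a ->
  biconnected_set e [set z in a :: q].
Proof.
move=> Hu Hs Hp Hl; split; last split.
- rewrite cardsE (card_uniqP Hu) /=. by [].
- apply: (connected_path Hp) => z; by rewrite inE.
- move=> v; rewrite inE => Hv.
  case: (rot_to Hv) => i q' Hrot.
  have Hc : cycle e (v :: q') by rewrite -Hrot rot_cycle /= rcons_path Hp Hl.
  have Hu' : uniq (v :: q') by rewrite -Hrot rot_uniq.
  have Hsz : size q' = size q by have := congr1 size Hrot; rewrite size_rot /= => [[]].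
  case: q' Hrot Hc Hu' Hsz => [|b q''] Hrot Hc Hu' Hsz; first by rewrite -Hsz in Hs.
  move: Hc; rewrite /= rcons_path => /andP [_ /andP [Hp' _]].
  apply: (connected_path Hp') => z.
  rewrite in_setD1 inE -(mem_rot i (a :: q)) Hrot in_cons.
  case: eqP => [->|] /=.
    by move: Hu' => /= /andP [/negbTE -> _].
  by [].
Qed.

Lemma bicon_block S : biconnected_set e S -> exists B : {set T}, S \subset B /\ is_block e B.
Proof.
move: {2}(#|T| - #|S|) (leqnn (#|T| - #|S|)) => n.
elim: n S => [|n IH] S Hn HS.
  exists S; split; first exact: subxx.
  split => // S' HSS' _.
  apply/eqP; rewrite eq_sym eqEcard HSS' /=.
  have H1 : #|S'| <= #|T| by apply: max_card.
  lia.
case: (classic (is_block e S)) => Hb; first by exists S.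
have : ~ (forall S' : {set T}, S \subset S' -> biconnected_set e S' -> S' = S).
  by move=> H; apply: Hb; split.
move/not_all_ex_not => [S' H].
have [HSS' H'] := imply_to_and _ _ H.
have [HS' Hne] := imply_to_and _ _ H'.
have Hpr : S \proper S'.
  rewrite properEneq HSS' andbT; apply/eqP => E; by apply: Hne; rewrite E.
have Hlt := proper_card Hpr.
have [B [HB1 HB2]] : exists B : {set T}, S' \subset B /\ is_block e B.
  apply: IH => //. have H1 : #|S'| <= #|T| by apply: max_card.
  lia.
exists B; split => //; exact: subset_trans HSS' HB1.
Qed.

Hypothesis hblock : block_graph e.

Lemma cliqueP (K : {set T}) : reflect (forall x y, x \in K -> y \in K -> x != y -> e x y) (is_clique e K).
Proof.
apply: (iffP forallP) => [H x y Hx Hy Hxy | H x].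
  by move: (H x); rewrite Hx /= => /forallP /(_ y); rewrite Hy Hxy.
apply/implyP => Hx; apply/forallP => y; apply/implyP => Hy; apply/implyP; exact: H.
Qed.

Lemma cyc a q : uniq (a :: q) -> 2 <= size q -> path e a q -> e (last a q) a ->
  forall y z, y \in a :: q -> z \in a :: q -> y != z -> e y z.
Proof.
move=> Hu Hs Hp Hl y z Hy Hz Hyz.
have [B [HSB HB]] := bicon_block (cycle_bicon Hu Hs Hp Hl).
move/cliqueP: (hblock HB); apply => //; apply: (subsetP HSB); by rewrite inE.
Qed.


Lemma memsplit (z : T) s : z \in s -> exists s1 s2, s = s1 ++ z :: s2.
Proof. by case/splitPr => s1 s2; exists s1, s2. Qed.

Lemma cyc_pref a b l1 c l2 : uniq (a :: b :: (l1 ++ c :: l2)) -> e a b ->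
  path e b (l1 ++ c :: l2) -> e c a ->
  forall y z, y \in a :: b :: rcons l1 c -> z \in a :: b :: rcons l1 c -> y != z -> e y z.
Proof.
move=> Hu Hab Hp Hca; apply: cyc.
- move: Hu; rewrite -cats1 -[a :: b :: (l1 ++ c :: l2)]/((a :: b :: l1) ++ c :: l2).
  rewrite -[c :: l2]/([:: c] ++ l2) catA -[a :: b :: (l1 ++ [:: c])]/((a :: b :: l1) ++ [:: c]).
  by rewrite cat_uniq => /andP [].
- by rewrite /= size_rcons.
- by rewrite /= Hab rcons_path; move: Hp; rewrite cat_path /= => /andP [-> /andP [-> _]].
- by rewrite /= last_rcons.
Qed.

Definition NV (V : {set T}) x := N x :&: V.

Lemma leaf_exists (V : {set T}) :
  (forall x y, x \in V -> y \in V -> x != y -> NV V x != NV V y) ->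
  forall n (x : T) (p : seq T), nT - size p <= n -> uniq (x :: p) -> path e x p -> {subset x :: p <= V} ->
  exists s, s \in V /\ (NV V s = [set s] \/ exists t, t != s /\ NV V s = [set s; t]).
Proof.
move=> Hid; elim=> [|n IH] x p Hn Hu Hp Hs.
  have H := uniq_size_le Hu; rewrite /= in H; lia.
have Hsz := uniq_size_le Hu.
have longer : forall (x' : T) (p' : seq T), size p < size p' -> uniq (x' :: p') -> path e x' p' ->
    {subset x' :: p' <= V} ->
    exists s, s \in V /\ (NV V s = [set s] \/ exists t, t != s /\ NV V s = [set s; t]).
  move=> x' p' Hlt Hu' Hp' Hs'; apply: (IH x' p') => //.
  have := uniq_size_le Hu'; rewrite /= in Hsz *; lia.
have HxV : x \in V by apply: Hs; rewrite mem_head.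
case: (boolP [exists z, [&& z \in V, e x z & z \notin x :: p]]).
  case/existsP => z /and3P [HzV Hxz Hzn].
  apply: (longer z (x :: p)) => //.
  - by rewrite /= Hzn.
  - by rewrite /= esym Hxz.
  - by move=> y; rewrite in_cons => /orP [/eqP -> //|]; apply: Hs.
move/existsPn => Hnf.
have Hnf' : forall z, z \in V -> e x z -> z \in x :: p.
  move=> z HzV Hxz; move: (Hnf z); by rewrite HzV Hxz /= negbK.
case: p Hn Hu Hp Hs Hsz longer Hnf Hnf' => [|p0 r] Hn Hu Hp Hs Hsz longer Hnf Hnf'.
  exists x; split => //; left; apply/setP => z; rewrite !inE.
  case: eqP => [->|/eqP Hzx] /=; first by rewrite HxV.
  apply/negbTE/negP => /andP [Hxz HzV].
  by move: (Hnf' z HzV Hxz); rewrite inE (negbTE Hzx).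
have Hp0V : p0 \in V by apply: Hs; rewrite !inE eqxx orbT.
move: (Hp) => /= /andP [Hxp0 Hpr].
move: (Hu) => /= /andP [Hxn /andP [Hp0r Hur]].
have Hxp0ne : x != p0 by move: Hxn; rewrite inE negb_or => /andP [].
have Hxr : x \notin r by move: Hxn; rewrite inE negb_or => /andP [].
case: (boolP [exists y, [&& y \in V, e x y & y \notin [:: x; p0]]]); last first.
  move/existsPn => Hny.
  exists x; split => //; right; exists p0; split; first by rewrite eq_sym.
  apply/setP => z; rewrite !inE.
  case: (z =P x) => [->|/eqP Hzx] /=; first by rewrite HxV.
  case: (z =P p0) => [->|/eqP Hzp] /=; first by rewrite Hxp0 Hp0V.
  apply/negbTE/negP => /andP [Hxz HzV].
  by move: (Hny z); rewrite HzV Hxz !inE (negbTE Hzx) (negbTE Hzp).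
case/existsP => y /and3P [HyV Hxy Hyn].
have Hyr : y \in r.
  move: (Hnf' y HyV Hxy) Hyn; rewrite !inE; by case: (y == x); case: (y == p0).
have Hu2 : uniq (p0 :: x :: r).
  by rewrite /= inE negb_or eq_sym Hxp0ne Hp0r Hxr Hur.
have Hxrp : path e x r.
  have [r1 [r2 Er]] := memsplit Hyr.
  have C2 := cyc_pref (a:=x) (b:=p0) (l1:=r1) (c:=y) (l2:=r2)
    (ltac:(by rewrite -Er)) Hxp0 (ltac:(by rewrite -Er)) (ltac:(by rewrite esym)).
  move: Hpr Hxr; rewrite Er.
  case: r1 {Er} C2 => [|p1 r1'] C2 /=.
    by move=> /andP [_ ->]; rewrite Hxy.
  move=> /andP [_ ->] Hxr'; rewrite andbT; apply: C2.
  - by rewrite mem_head.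
  - by rewrite !inE eqxx !orbT.
  - by apply/eqP => E; move: Hxr'; rewrite E inE eqxx.
case: (boolP [exists z, [&& z \in V, e p0 z & z \notin x :: p0 :: r]]).
  case/existsP => z /and3P [HzV Hpz Hzn].
  apply: (longer z (p0 :: x :: r)) => //.
  - rewrite /= in Hu2 *; rewrite Hu2 andbT.
    by move: Hzn; rewrite !inE; case: (z == x); case: (z == p0).
  - by rewrite /= esym Hpz esym Hxp0 Hxrp.
  - move=> w; rewrite !inE => /orP [/eqP -> //|/orP [/eqP -> //|/orP [/eqP -> //|Hw]]].
    by apply: Hs; rewrite !inE Hw !orbT.
move/existsPn => Hnf0.
have Hnf0' : forall z, z \in V -> e p0 z -> z \in x :: p0 :: r.
  move=> z HzV Hpz; move: (Hnf0 z); by rewrite HzV Hpz /= negbK.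
have Heq : NV V x = NV V p0.
  apply/setP => z; rewrite !inE.
  case HzV : (z \in V); last by rewrite !andbF.
  rewrite !andbT; apply/idP/idP.
    case/orP => [/eqP ->| Hxz]; first by rewrite esym Hxp0 orbT.
    case: (z =P p0) => [->|/eqP Hzp]; first by [].
    have Hzr : z \in r.
      move: (Hnf' z HzV Hxz); rewrite !inE (negbTE Hzp) /=.
      case/orP => // /eqP E; by move: Hxz; rewrite E eirr.
    have [r3 [r4 Er]] := memsplit Hzr.
    have C := cyc_pref (a:=x) (b:=p0) (l1:=r3) (c:=z) (l2:=r4)
      (ltac:(by rewrite -Er)) Hxp0 (ltac:(by rewrite -Er)) (ltac:(by rewrite esym)).
    apply/orP; right; apply: C.
    - by rewrite !inE eqxx orbT.
    - by rewrite !inE mem_rcons inE eqxx !orbT.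
    - by rewrite eq_sym.
  case/orP => [/eqP ->| Hpz]; first by rewrite Hxp0 orbT.
  case: (z =P x) => [->|/eqP Hzx]; first by [].
  have Hzr : z \in r.
    move: (Hnf0' z HzV Hpz); rewrite !inE (negbTE Hzx) /=.
    case/orP => // /eqP E; by move: Hpz; rewrite E eirr.
  have [r3 [r4 Er]] := memsplit Hzr.
  have C := cyc_pref (a:=p0) (b:=x) (l1:=r3) (c:=z) (l2:=r4)
    (ltac:(by rewrite -Er)) (ltac:(by rewrite esym)) (ltac:(by rewrite -Er)) (ltac:(by rewrite esym)).
  apply/orP; right; apply: C.
  - by rewrite !inE eqxx orbT.
  - by rewrite !inE mem_rcons inE eqxx !orbT.
  - by rewrite eq_sym.
by move: (Hid x p0 HxV Hp0V Hxp0ne); rewrite Heq eqxx.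
Qed.


Definition maxcl (V K : {set T}) : bool :=
  [&& K \subset V, is_clique e K &
      [forall K2 : {set T}, [&& K \subset K2, K2 \subset V & is_clique e K2] ==> (K2 == K)]].
Definition nQV (V : {set T}) := #|[set K | maxcl V K]|.

Lemma maxclP (V K : {set T}) : reflect [/\ K \subset V, is_clique e K &
    forall K2 : {set T}, K \subset K2 -> K2 \subset V -> is_clique e K2 -> K2 = K] (maxcl V K).
Proof.
apply: (iffP and3P) => [[H1 H2 /forallP H3]|[H1 H2 H3]]; split => //.
  move=> K2 h1 h2 h3; apply/eqP; move: (H3 K2); by rewrite h1 h2 h3.
apply/forallP => K2; apply/implyP => /and3P [h1 h2 h3]; apply/eqP; exact: H3.
Qed.

Lemma clique_sub (K K2 : {set T}) : K \subset K2 -> is_clique e K2 -> is_clique e K.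
Proof. move=> H /cliqueP C; apply/cliqueP => x y Hx Hy; apply: C; exact: (subsetP H). Qed.

Lemma clique_add a (K : {set T}) : is_clique e K -> (forall w, w \in K -> w != a -> e a w) ->
  is_clique e (a |: K).
Proof.
move=> /cliqueP C H; apply/cliqueP => x y; rewrite !inE.
case/orP => [/eqP ->|Hx]; case/orP => [/eqP ->|Hy].
- by rewrite eqxx.
- by move=> Hay; apply: H => //; rewrite eq_sym.
- by move=> Hxa; rewrite esym; apply: H.
- exact: C.
Qed.

Lemma setD1_id (u : T) (K : {set T}) : u \notin K -> K :\ u = K.
Proof. move=> Hu; apply/setP => w; rewrite !inE; case: eqP => // ->; by rewrite (negbTE Hu). Qed.

Lemma inNV (V : {set T}) x z : (z \in NV V x) = (z \in N x) && (z \in V).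
Proof. by rewrite /NV in_setI. Qed.

Lemma NV_clique_max (V : {set T}) s : s \in V -> is_clique e (NV V s) -> maxcl V (NV V s).
Proof.
move=> Hs Hc; apply/maxclP; split => //; first exact: subsetIr.
move=> K2 H1 H2 /cliqueP H3; apply/eqP; rewrite eqEsubset H1 andbT.
apply/subsetP => z Hz; rewrite inNV (subsetP H2 _ Hz) andbT inN.
case: eqP => //= /eqP Hzs; apply: H3 => //; last by rewrite eq_sym.
by apply: (subsetP H1); rewrite inNV inNself.
Qed.

Definition good (V C : {set T}) := [/\ C \subset V, forall x, x \in V -> N x :&: C != set0 &
   forall x y, x \in V -> y \in V -> NV V x != NV V y -> N x :&: C != N y :&: C].

Lemma good_empty : good set0 set0.
Proof. by split => // x; rewrite inE. Qed.

Lemma sigNV (V C : {set T}) x : C \subset V -> N x :&: C = NV V x :&: C.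
Proof. move=> H; by rewrite /NV -setIA (setIidPr H). Qed.

Lemma twin_nQ (V : {set T}) u v : u \in V -> v \in V -> u != v -> NV V u = NV V v ->
  nQV (V :\ u) <= nQV V.
Proof.
move=> Hu Hv Huv Heq.
have memUV : forall w, w \in V -> (w \in N u) = (w \in N v).
  move=> w Hw; move/setP: Heq => /(_ w); by rewrite !inNV Hw !andbT.
pose f (K : {set T}) := if v \in K then u |: K else K.
rewrite /nQV -(card_in_imset (f := f)); last first.
  move=> K1 K2; rewrite !inE => /maxclP [H1 _ _] /maxclP [H2 _ _] E.
  have Hn1 : u \notin K1 by apply/negP => /(subsetP H1); rewrite !inE eqxx.
  have Hn2 : u \notin K2 by apply/negP => /(subsetP H2); rewrite !inE eqxx.
  have : f K1 :\ u = f K2 :\ u by rewrite E.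
  by rewrite /f; case: (v \in K1); case: (v \in K2); rewrite ?setU1K ?setD1_id.
apply: subset_leq_card; apply/subsetP => K' /imsetP [K]; rewrite inE => /maxclP [H1 H2 H3] ->.
rewrite inE /f.
have HuK : u \notin K by apply/negP => /(subsetP H1); rewrite !inE eqxx.
have HKV : K \subset V by apply: subset_trans H1 (subsetDl _ _).
case: ifP => HvK; apply/maxclP; split.
- by rewrite subUset sub1set Hu HKV.
- apply: clique_add => // w Hw Hwu.
  have HwV : w \in V by apply: (subsetP HKV).
  have : w \in N v.
    rewrite inN; case: eqP => //= /eqP Hwv; move/cliqueP: H2; apply => //; by rewrite eq_sym.
  by rewrite -memUV // inN (negbTE Hwu).
- move=> K2 S1 S2 S3.
  have HuK2 : u \in K2 by apply: (subsetP S1); rewrite setU11.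
  rewrite -(setD1K HuK2); congr (_ |: _); apply: H3.
  + apply/subsetP => w Hw; rewrite !inE (subsetP S1) ?andbT; last by rewrite inE Hw orbT.
    by apply: contraNneq HuK => <-.
  + exact: setSD.
  + apply: clique_sub S3; exact: subsetDl.
- exact: HKV.
- exact: H2.
- move=> K2 S1 S2 S3.
  case: (boolP (u \in K2)) => HuK2; last first.
    apply: H3 => //; apply/subsetP => w Hw; rewrite !inE (subsetP S2 _ Hw) andbT.
    by apply: contraNneq HuK2 => <-.
  have HvV' : v \in V :\ u by rewrite !inE eq_sym Huv Hv.
  have E : v |: (K2 :\ u) = K.
    apply: H3.
    + apply/subsetP => w Hw; rewrite !inE (subsetP S1 _ Hw) !andbT.
      by rewrite (_ : w != u) ?orbT //; apply: contraNneq HuK => <-.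
    + rewrite subUset sub1set HvV'; exact: setSD.
    + apply: clique_add; first by apply: clique_sub S3; exact: subsetDl.
      move=> w; rewrite !inE => /andP [Hwu HwK2] Hwv.
      have HwV : w \in V by apply: (subsetP S2).
      have : w \in N u.
        rewrite inN (negbTE Hwu) /=; move/cliqueP: S3; apply => //; by rewrite eq_sym.
      by rewrite memUV // inN (negbTE Hwv).
  by move: HvK; rewrite -E setU11.
Qed.

Lemma twin_good (V C : {set T}) u v : u \in V -> v \in V -> u != v -> NV V u = NV V v ->
  good (V :\ u) C -> good V C.
Proof.
move=> Hu Hv Huv Heq [H1 H2 H3].
have memUV : forall w, w \in V -> (w \in N u) = (w \in N v).
  move=> w Hw; move/setP: Heq => /(_ w); by rewrite !inNV Hw !andbT.
have HCV : C \subset V := subset_trans H1 (subsetDl _ _).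
have HvV' : v \in V :\ u by rewrite !inE eq_sym Huv Hv.
pose rho z := if z == u then v else z.
have rhoV : forall z, z \in V -> rho z \in V :\ u.
  move=> z Hz; rewrite /rho; case: eqP => [//|/eqP Hzu]; by rewrite !inE Hzu Hz.
have rhoN : forall z, NV V (rho z) = NV V z by move=> z; rewrite /rho; case: eqP => // ->.
have rhoS : forall z, N (rho z) :&: C = N z :&: C by move=> z; rewrite !(sigNV _ HCV) rhoN.
have key : forall c, c \in V :\ u -> (u \in NV V c) = (v \in NV (V :\ u) c).
  move=> c Hc; have HcV : c \in V by move: Hc; rewrite inE => /andP [].
  by rewrite !inNV Hu HvV' !andbT inNC memUV // inNC.
have sep : forall a b, a \in V :\ u -> b \in V :\ u -> NV V a != NV V b ->
    NV (V :\ u) a != NV (V :\ u) b.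
  move=> a b Ha Hb; apply: contra => /eqP E; apply/eqP/setP => z.
  case: (z =P u) => [->|/eqP Hzu]; first by rewrite !key // E.
  move/setP: E => /(_ z); by rewrite !inNV !inE Hzu.
split => //.
- move=> x Hx; rewrite -rhoS; apply: H2; exact: rhoV.
- move=> x y Hx Hy Hxy; rewrite -(rhoS x) -(rhoS y); apply: H3; try exact: rhoV.
  apply: sep; try exact: rhoV; by rewrite !rhoN.
Qed.

Lemma maxcl_lift (V K : {set T}) s : s \in V ->
  (forall K : {set T}, K \subset NV V s :\ s -> ~~ maxcl (V :\ s) K) -> maxcl (V :\ s) K -> maxcl V K.
Proof.
move=> Hs Hno HK0; have /maxclP [H1 H2 H3] := HK0; apply/maxclP; split => //.
  exact: subset_trans H1 (subsetDl _ _).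
move=> K2 S1 S2 S3.
case: (boolP (s \in K2)) => HsK2; last first.
  apply: H3 => //; apply/subsetP => w Hw; rewrite !inE (subsetP S2 _ Hw) andbT.
  by apply: contraNneq HsK2 => <-.
have HK : K \subset NV V s :\ s.
  apply/subsetP => w Hw; have := subsetP H1 _ Hw.
  rewrite !inE => /andP [Hws HwV]; rewrite Hws HwV andbT /= (negbTE Hws) /=.
  move/cliqueP: S3; apply => //; first exact: (subsetP S1 _ Hw).
  by rewrite eq_sym.
by move: (Hno K HK); rewrite HK0.
Qed.

Lemma nQ_leaf (V : {set T}) s : s \in V -> is_clique e (NV V s) ->
  (forall K : {set T}, K \subset NV V s :\ s -> ~~ maxcl (V :\ s) K) -> nQV (V :\ s) < nQV V.
Proof.
move=> Hs Hc Hno; apply: proper_card; apply/properP; split.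
  apply/subsetP => K; rewrite !inE; exact: maxcl_lift.
exists (NV V s); first by rewrite inE NV_clique_max.
rewrite inE; apply/negP => /maxclP [H1 _ _].
by move: (subsetP H1 s); rewrite inNV inNself Hs !inE eqxx => /(_ isT).
Qed.

Lemma cardU1_le (a : T) (A : {set T}) : #|a |: A| <= #|A|.+1.
Proof. by rewrite cardsU1; case: (a \notin A). Qed.

Lemma sigU1 (a : T) (A : {set T}) z :
  N z :&: (a |: A) = if a \in N z then a |: (N z :&: A) else N z :&: A.
Proof.
apply/setP => y; rewrite in_setI in_setU1; case: ifP => H.
  by rewrite in_setU1 in_setI; case: (y =P a) => [->|_] /=; rewrite ?H.
by rewrite in_setI; case: (y =P a) => [->|_] /=; rewrite ?H ?andbF.
Qed.


Lemma sub_set1_eq (A : {set T}) t : A \subset [set t] -> A != set0 -> A = [set t].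
Proof.
move=> H /set0Pn [a Ha]; apply/eqP; rewrite eqEsubset H /= sub1set.
by have := subsetP H _ Ha; rewrite inE => /eqP <-.
Qed.

Lemma sdiff (s : T) (A B : {set T}) : (s \in A) != (s \in B) -> A != B.
Proof. by apply: contra => /eqP ->. Qed.

Lemma clique_pair (a b : T) : e a b -> is_clique e [set a; b].
Proof.
move=> Hab; apply/cliqueP => x y; rewrite !inE.
case/orP => /eqP ->; case/orP => /eqP ->; rewrite ?eqxx //; by rewrite esym.
Qed.

Lemma clique1 (a : T) : is_clique e [set a].
Proof. by apply/cliqueP => x y; rewrite !inE => /eqP -> /eqP ->; rewrite eqxx. Qed.

Lemma pendant_facts (V : {set T}) s t : s \in V -> t != s -> NV V s = [set s; t] ->
  (forall x y, x \in V -> y \in V -> x != y -> NV V x != NV V y) ->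
  [/\ t \in V, e s t & exists w, [/\ w \in V, w != s, w != t & e t w]].
Proof.
move=> Hs Hts Hpen Hid.
have : t \in NV V s by rewrite Hpen !inE eqxx orbT.
rewrite inNV inN (negbTE Hts) /= => /andP [Hst HtV].
split => //.
have Hst' : s != t by rewrite eq_sym.
have Hne := Hid s t Hs HtV Hst'.
have : ~~ (NV V t \subset [set s; t]).
  apply/negP => Hsub; move: Hne; rewrite Hpen eqEsubset Hsub andbT.
  move/negP; apply; apply/subsetP => z; rewrite in_setU1 in_set1 => /orP [/eqP ->|/eqP ->].
    by rewrite inNV Hs andbT inN esym Hst orbT.
  by rewrite inNV inNself HtV.
case/subsetPn => w; rewrite inNV inN => /andP [Hw HwV].
rewrite !inE negb_or => /andP [Hws Hwt].
exists w; split => //; move: Hw; by rewrite (negbTE Hwt).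
Qed.

Lemma pendant_good (V C' : {set T}) s t : s \in V -> t != s -> NV V s = [set s; t] ->
  (forall x y, x \in V -> y \in V -> x != y -> NV V x != NV V y) ->
  good (V :\ s) C' -> exists C, good V C /\ #|C| <= #|C'|.+1.
Proof.
move=> Hs Hts Hpen Hid [HC'V HD' HS'].
have [HtV Hst [w [HwV Hws Hwt Htw]]] := pendant_facts Hs Hts Hpen Hid.
set V' := V :\ s.
have HtV' : t \in V' by rewrite !inE Hts HtV.
have HwV' : w \in V' by rewrite !inE Hws HwV.
have HsC' : s \notin C' by apply/negP => /(subsetP HC'V); rewrite !inE eqxx.
have HC'V0 : C' \subset V := subset_trans HC'V (subsetDl _ _).
have F1 : forall z, z \in V -> (s \in N z) = (z == s) || (z == t).
  move=> z Hz; rewrite inNC.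
  have := congr1 (fun A : {set T} => z \in A) Hpen; rewrite /= inNV Hz andbT => ->; by rewrite !inE.
have V'V : forall z, z \in V' -> z \in V by move=> z; rewrite in_setD1 => /andP [_ ->].
have V'ne : forall z, z \in V' -> z != s by move=> z; rewrite in_setD1 => /andP [-> _].
have F2 : forall z, z \in V' -> z != t -> NV V z = NV V' z.
  move=> z Hz Hzt; apply/setP => y; rewrite !inNV in_setD1.
  case: (y =P s) => [->|/eqP Hys]; last by [].
  by rewrite andbF /= (F1 z (V'V z Hz)) (negbTE (V'ne z Hz)) (negbTE Hzt).
have F3 : forall x y, x \in V' -> y \in V' -> x != t -> y != t ->
    NV V x != NV V y -> NV V' x != NV V' y.
  by move=> x y Hx Hy Hxt Hyt; rewrite -!F2.
have sepc : forall x y, x \in V' -> y \in V' -> N x :&: C' = N y :&: C' -> NV V' x = NV V' y.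
  move=> x y Hx Hy E; apply/eqP; apply: contraT => /(HS' x y Hx Hy); by rewrite E eqxx.
have NVne : forall x y, NV V x != NV V y -> x != y by move=> x y; apply: contra => /eqP ->.
have sigs_sub : N s :&: C' \subset [set t].
  apply/subsetP => z; rewrite in_setI => /andP [Hz HzC].
  have HzV' := subsetP HC'V _ HzC.
  have : z \in NV V s by rewrite inNV Hz V'V.
  by rewrite Hpen !inE (negbTE (V'ne _ HzV')).
case: (boolP (N t :&: C' == [set t])) => Ht1; last first.
  exists (s |: C'); split; last exact: cardU1_le.
  split.
  - by rewrite subUset sub1set Hs HC'V0.
  - move=> x Hx; rewrite sigU1; case: ifP => Hsx.
      by apply/set0Pn; exists s; rewrite setU11.
    apply: HD'; rewrite !inE Hx andbT; apply: contraFneq _ Hsx => ->; exact: inNself.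
  - move=> x y Hx Hy Hxy; have Hxy' := NVne _ _ Hxy.
    have claim : s |: (N s :&: C') != s |: (N t :&: C').
      apply/negP => /eqP E.
      have n1 : s \notin N s :&: C' by rewrite in_setI (negbTE HsC') andbF.
      have n2 : s \notin N t :&: C' by rewrite in_setI (negbTE HsC') andbF.
      have E' : N s :&: C' = N t :&: C' by rewrite -(setU1K n1) E setU1K.
      have := sub_set1_eq sigs_sub; rewrite E' => H.
      by move: Ht1; rewrite H ?eqxx //; exact: HD'.
    rewrite !sigU1 !F1 //.
    case Ex : ((x == s) || (x == t)); case Ey : ((y == s) || (y == t)).
    + case/orP: Ex => /eqP Ex; case/orP: Ey => /eqP Ey; subst x y.
      * by rewrite eqxx in Hxy'.
      * exact: claim.
      * by rewrite eq_sym.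
      * by rewrite eqxx in Hxy'.
    + apply: (sdiff (s := s)); by rewrite setU11 in_setI (negbTE HsC') andbF.
    + apply: (sdiff (s := s)); by rewrite setU11 in_setI (negbTE HsC') andbF.
    + move/negbT: Ex; rewrite negb_or => /andP [Hxs Hxt].
      move/negbT: Ey; rewrite negb_or => /andP [Hys Hyt].
      have Hx' : x \in V' by rewrite !inE Hxs Hx.
      have Hy' : y \in V' by rewrite !inE Hys Hy.
      by apply: HS' => //; apply: F3.
move/eqP: Ht1 => Ht1.
have Htt : t \in N t :&: C' by rewrite Ht1 set11.
have HtC' : t \in C' by move: Htt; rewrite in_setI => /andP [_ ->].
case: (boolP [exists v, [&& v \in V', v != t & NV V' v == NV V' t]]).
  case/existsP => v /and3P [HvV' Hvt /eqP Htw'].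
  have Hvv : v \in NV V' v by rewrite inNV inNself HvV'.
  have HvNt : v \in N t by move: Hvv; rewrite Htw' inNV => /andP [-> _].
  have HvC' : v \notin C'.
    apply/negP => HvC; have : v \in N t :&: C' by rewrite in_setI HvNt.
    by rewrite Ht1 inE (negbTE Hvt).
  have key : forall z, z \in V' -> (v \in N z) = (t \in N z).
    move=> z Hz; rewrite inNC.
    transitivity (z \in NV V' v); first by rewrite inNV Hz andbT.
    by rewrite Htw' inNV Hz andbT inNC.
  have Hvs := V'ne v HvV'.
  have HvV := V'V v HvV'.
  have Hsv : (s \in N v) = false by rewrite F1 // (negbTE Hvs) (negbTE Hvt).
  pose C := s |: (v |: (C' :\ t)).
  have memC : forall c, (c \in C) = [|| c == s, c == v | (c != t) && (c \in C')].
    by move=> c; rewrite !in_setU1 in_setD1.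
  exists C; split.
  - split.
    + rewrite subUset sub1set Hs subUset sub1set HvV /=.
      exact: subset_trans (subsetDl _ _) HC'V0.
    + move=> x Hx; case: (x =P s) => [->|/eqP Hxs].
        by apply/set0Pn; exists s; rewrite in_setI inNself memC eqxx.
      have Hx' : x \in V' by rewrite !inE Hxs Hx.
      case/set0Pn: (HD' x Hx') => c; rewrite in_setI => /andP [Hc HcC].
      case: (c =P t) => [Ect|/eqP Hct].
        apply/set0Pn; exists v; rewrite in_setI key // -Ect Hc memC eqxx.
        by rewrite !orbT.
      by apply/set0Pn; exists c; rewrite in_setI Hc memC Hct HcC !orbT.
    + move=> x y Hx Hy Hxy; have Hxy' := NVne _ _ Hxy.
      have sMem : forall z, z \in V -> (s \in N z :&: C) = (z == s) || (z == t).
        by move=> z Hz; rewrite in_setI memC eqxx /= andbT F1.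
      have claim : N s :&: C != N t :&: C.
        apply/negP => /eqP E.
        have : v \in N t :&: C by rewrite in_setI HvNt memC eqxx orbT.
        by rewrite -E in_setI inNC Hsv.
      case Ex : ((x == s) || (x == t)); case Ey : ((y == s) || (y == t)).
      * case/orP: Ex => /eqP Ex; case/orP: Ey => /eqP Ey; subst x y.
        -- by rewrite eqxx in Hxy'.
        -- exact: claim.
        -- by rewrite eq_sym.
        -- by rewrite eqxx in Hxy'.
      * by apply: (sdiff (s := s)); rewrite !sMem // Ex Ey.
      * by apply: (sdiff (s := s)); rewrite !sMem // Ex Ey.
      * move/negbT: Ex; rewrite negb_or => /andP [Hxs Hxt].
        move/negbT: Ey; rewrite negb_or => /andP [Hys Hyt].
        have Hx' : x \in V' by rewrite !inE Hxs Hx.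
        have Hy' : y \in V' by rewrite !inE Hys Hy.
        have HN := F3 x y Hx' Hy' Hxt Hyt Hxy.
        apply/negP => /eqP E; move: HN; rewrite (sepc x y Hx' Hy') ?eqxx //.
        apply/setP => c; rewrite !in_setI.
        case HcC : (c \in C'); last by rewrite !andbF.
        rewrite !andbT; case: (c =P t) => [->|/eqP Hct].
          rewrite -!key //; have := congr1 (fun A : {set T} => v \in A) E.
          by rewrite /= !in_setI memC eqxx orbT !andbT.
        have := congr1 (fun A : {set T} => c \in A) E.
        by rewrite /= !in_setI memC Hct HcC !orbT !andbT.
  - have h1 := cardU1_le s (v |: (C' :\ t)).
    have h2 := cardU1_le v (C' :\ t).
    have h3 := cardsD1 t C'; rewrite HtC' in h3.
    apply: (leq_trans h1); rewrite ltnS; apply: (leq_trans h2); by rewrite h3.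
move/existsPn => Hnt'.
have Hnt : forall v, v \in V' -> v != t -> NV V' v != NV V' t.
  by move=> v Hv Hvt; move: (Hnt' v); rewrite Hv Hvt.
have HwNt : w \in N t by rewrite inN Htw orbT.
have HwC' : w \notin C'.
  apply/negP => HwC; have : w \in N t :&: C' by rewrite in_setI HwNt.
  by rewrite Ht1 inE (negbTE Hwt).
have Hsw : (w \in N s) = false by rewrite inNC F1 // (negbTE Hws) (negbTE Hwt).
have HsigS : N s :&: C' = [set t].
  have HH := sub_set1_eq sigs_sub; apply: HH; apply/set0Pn; exists t.
  by rewrite in_setI HtC' andbT inN Hst orbT.
have remw : forall (A : {set T}) b, w \notin A -> (if b then w |: A else A) :\ w = A.
  by move=> A [] H; rewrite ?setU1K ?setD1_id.
have wnsig : forall z, w \notin N z :&: C' by move=> z; rewrite in_setI (negbTE HwC') andbF.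
exists (w |: C'); split; last exact: cardU1_le.
split.
- by rewrite subUset sub1set HwV HC'V0.
- move=> x Hx; rewrite sigU1; case: ifP => Hwx.
    by apply/set0Pn; exists w; rewrite setU11.
  case: (x =P s) => [->|/eqP Hxs].
    by rewrite HsigS; apply/set0Pn; exists t; rewrite set11.
  by apply: HD'; rewrite !inE Hxs Hx.
- move=> x y Hx Hy Hxy; have Hxy' := NVne _ _ Hxy.
  have claimS : forall y, y \in V -> y != s -> N s :&: (w |: C') != N y :&: (w |: C').
    move=> y0 Hy0 Hy0s; rewrite !sigU1 Hsw HsigS; case: ifP => Hwy.
      apply/negP => /eqP E; have : w \in [set t] by rewrite E setU11.
      by rewrite inE (negbTE Hwt).
    have Hy0' : y0 \in V' by rewrite !inE Hy0s Hy0.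
    apply/negP => /eqP E.
    case: (y0 =P t) => [Eyt|/eqP Hyt].
      by move: Hwy; rewrite Eyt HwNt.
    have : NV V' y0 = NV V' t by apply: sepc => //; rewrite -E Ht1.
    by move/eqP; apply/negP; apply: Hnt.
  case: (x =P s) => [Exs|/eqP Hxs].
    subst x; apply: claimS => //; by rewrite eq_sym.
  case: (y =P s) => [Eys|/eqP Hys].
    subst y; rewrite eq_sym; exact: claimS.
  have Hx' : x \in V' by rewrite !inE Hxs Hx.
  have Hy' : y \in V' by rewrite !inE Hys Hy.
  case: (boolP (NV V' x == NV V' y)) => [/eqP Eq|Hne].
    case: (x =P t) => [Ext|/eqP Hxt].
      have Hyt : y != t by rewrite -Ext eq_sym.
      by move: (Hnt y Hy' Hyt); rewrite -Eq Ext eqxx.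
    case: (y =P t) => [Eyt|/eqP Hyt].
      by move: (Hnt x Hx' Hxt); rewrite Eq Eyt eqxx.
    by move: (F3 x y Hx' Hy' Hxt Hyt Hxy); rewrite Eq eqxx.
  have Hs' := HS' x y Hx' Hy' Hne.
  apply/negP => /eqP E.
  have E' : N x :&: C' = N y :&: C'.
    by move: (congr1 (fun A : {set T} => A :\ w) E); rewrite /= !sigU1 !remw.
  by rewrite E' eqxx in Hs'.
Qed.

Lemma NV_del (V : {set T}) s z : (s \in N z) = false -> NV V z = NV (V :\ s) z.
Proof.
move=> H; apply/setP => y; rewrite !inNV in_setD1.
by case: (y =P s) => [->|_]; rewrite ?H.
Qed.

Lemma GS (V : {set T}) : exists C, good V C /\ #|C| <= nQV V.
Proof.
move: {2}#|V| (leqnn #|V|) => n; elim: n V => [|n IH] V HV.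
  have -> : V = set0 by apply/eqP; rewrite -cards_eq0; lia.
  by exists set0; split; [exact: good_empty | rewrite cards0].
have IHs : forall u, u \in V -> exists C, good (V :\ u) C /\ #|C| <= nQV (V :\ u).
  move=> u Hu; apply: IH; move: HV; rewrite (cardsD1 u V) Hu; lia.
case: (boolP [exists u, exists v, [&& u \in V, v \in V, u != v & NV V u == NV V v]]).
  case/existsP => u /existsP [v /and4P [Hu Hv Huv /eqP Heq]].
  have [C [HC HCn]] := IHs u Hu; exists C; split; first exact: twin_good Hu Hv Huv Heq HC.
  have := twin_nQ Hu Hv Huv Heq; lia.
move/existsPn => Hnt.
have Hid : forall x y, x \in V -> y \in V -> x != y -> NV V x != NV V y.
  move=> x y Hx Hy Hxy; apply/negP => /eqP E.
  by move: (Hnt x) => /existsPn /(_ y); rewrite Hx Hy Hxy E eqxx.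
case: (set_0Vmem V) => [->|[x Hx]].
  by exists set0; split; [exact: good_empty | rewrite cards0].
have Hsub : {subset [:: x] <= V} by move=> z; rewrite inE => /eqP ->.
have [s [Hs [Hiso|[t [Hts Hpen]]]]] := @leaf_exists V Hid nT x [::] (leq_subr _ _) isT isT Hsub.
  have [C' [[HC'V HD' HS'] HCn]] := IHs s Hs.
  have Fiso : forall z, z \in V -> z != s -> (s \in N z) = false.
    move=> z Hz Hzs; rewrite inNC.
    have := congr1 (fun A : {set T} => z \in A) Hiso; rewrite /= inNV Hz andbT => ->.
    by rewrite inE (negbTE Hzs).
  exists (s |: C'); split.
  - split.
    + rewrite subUset sub1set Hs /=; exact: subset_trans HC'V (subsetDl _ _).
    + move=> z Hz; rewrite sigU1; case: ifP => Hsz.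
        by apply/set0Pn; exists s; rewrite setU11.
      apply: HD'; rewrite !inE Hz andbT; apply: contraFneq _ Hsz => ->; exact: inNself.
    + move=> y1 y2 Hy1 Hy2 Hyy.
      have Hne : y1 != y2 by move: Hyy; apply: contra => /eqP ->.
      have sMem : forall z, z \in V -> (s \in N z :&: (s |: C')) = (z == s).
        move=> z Hz; rewrite in_setI in_setU1 eqxx /= andbT.
        case: (z =P s) => [->|/eqP Hzs]; first exact: inNself.
        exact: Fiso.
      case: (y1 =P s) => [E1|/eqP H1]; case: (y2 =P s) => [E2|/eqP H2].
      * by move: Hne; rewrite E1 E2 eqxx.
      * by apply: (sdiff (s := s)); rewrite !sMem // E1 eqxx (negbTE H2).
      * by apply: (sdiff (s := s)); rewrite !sMem // E2 eqxx (negbTE H1).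
      * rewrite !sigU1 !Fiso //; apply: HS'; rewrite ?inE ?H1 ?H2 ?Hy1 ?Hy2 //.
        by rewrite -!NV_del ?Fiso.
  - case: (set_0Vmem (V :\ s)) => [E|[w Hw]].
      have C0 : C' = set0 by apply/eqP; rewrite -subset0 -E.
      rewrite C0 setU0 cards1 /nQV card_gt0; apply/set0Pn; exists (NV V s).
      by rewrite inE NV_clique_max // Hiso; exact: clique1.
    have Hlt : nQV (V :\ s) < nQV V.
      apply: nQ_leaf => //; first by rewrite Hiso; exact: clique1.
      move=> K HK; apply/negP => /maxclP [H1 H2 H3].
      have HK0 : forall z, z \in K -> False.
        move=> z Hz; have := subsetP HK _ Hz; rewrite Hiso !inE.
        by case: (z =P s).
      have HKw : K \subset [set w] by apply/subsetP => z /HK0.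
      have := H3 [set w] HKw; rewrite sub1set Hw => /(_ isT (clique1 w)) E.
      by apply: (HK0 w); rewrite -E set11.
    have := cardU1_le s C'; lia.
have [HtV Hst [w [HwV Hws Hwt Htw]]] := pendant_facts Hs Hts Hpen Hid.
have [C' [HC' HCn]] := IHs s Hs.
have [C [HC HCs]] := pendant_good Hs Hts Hpen Hid HC'.
exists C; split => //.
have Hlt : nQV (V :\ s) < nQV V.
  apply: nQ_leaf => //; first by rewrite Hpen; apply: clique_pair.
  move=> K HK; apply/negP => /maxclP [H1 H2 H3].
  have HKt : K \subset [set t; w].
    apply/subsetP => z Hz; have := subsetP HK _ Hz; rewrite Hpen !inE.
    by case: (z =P s) => //= _ ->.
  have := H3 [set t; w] HKt.
  rewrite subUset !sub1set !inE Hts HtV Hws HwV => /(_ isT (clique_pair Htw)) E.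
  have : w \in K by rewrite -E !inE eqxx orbT.
  by move/(subsetP HK); rewrite Hpen !inE (negbTE Hws) (negbTE Hwt).
lia.
Qed.

End Proof.

Lemma bigmin_le_seq (I : eqType) (r : seq I) (P : pred I) (F : I -> nat) m i :
  i \in r -> P i -> \big[minn/m]_(j <- r | P j) F j <= F i.
Proof.
elim: r => [|a r IH] //= Hi Pi; rewrite big_cons.
move: Hi; rewrite inE => /orP [/eqP <-|Hi]; first by rewrite Pi geq_minl.
case: (P a); last exact: IH.
exact: leq_trans (geq_minr _ _) (IH Hi Pi).
Qed.

Theorem theorem2p1 (T : finType) (e : rel T) :
  symmetric e -> irreflexive e ->
  block_graph e -> identifiable e ->
  gammaID e <= nQ e.
Proof.
move=> esym eirr hb hid.
have [C [[_ HD HS] Hn]] := GS esym eirr hb [set: T].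
have Hc : is_idcode e C.
  apply/andP; split; apply/forallP => u; first by apply: HD; rewrite in_setT.
  apply/forallP => v; apply/implyP => Huv; apply: HS; rewrite ?in_setT //.
  by rewrite /NV !setIT; apply: hid.
have H1 : gammaID e <= #|C|.
  rewrite /gammaID; apply: bigmin_le_seq => //; exact: mem_index_enum.
apply: (leq_trans H1); apply: (leq_trans Hn).
rewrite /nQV /nQ; apply: eq_leq; apply: eq_card => K; rewrite !inE.
apply/idP/idP.
  move/maxclP => [_ H2 H3]; apply/maxsetP; split => // B HB HKB; apply: H3 => //; exact: subsetT.
move/maxsetP => [H2 H3]; apply/maxclP; split => //.
move=> K2 S1 _ S3; exact: H3.
Qed.
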